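(* Let $a_{n,k}$ denote the number of matchings of size $n$ containing exactly $k$ occurrences of the endhered pattern $21$ (equivalently, the same numbers for the pattern $12$), with $a_{n,k}$ defined for all integers $k$. Then for $n\ge1$ and all integers $k$, $$a_{n+1,k}=a_{n,k-1}+2(n-k)\,a_{n,k}+2(k+1)\,a_{n,k+1},$$ with $a_{1,0}=1$ and $a_{1,k}=0$ for $k\ne 0$. In particular $a_{n,k}=0$ whenever $k<0$.
   Context: A matching of size $n$ is a set of $n$ arcs $(a,b)$ with $1\le a<b\le 2n$ such that each point of $\{1,\dots,2n\}$ belongs to exactly one arc. An occurrence of the endhered pattern $21$ in a matching $\mu$ is a pair of arcs of $\mu$ of the form $(i+1,j+2),(i+2,j+1)$ (two nested arcs whose starting points are consecutive and whose ending points are consecutive); an occurrence of $12$ is a pair of arcs of the form $(i+1,j+1),(i+2,j+2)$ (two crossing arcs with consecutive starting points and consecutive ending points). The number of occurrences is the number of such pairs. *)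

(* Defs.v *)
From HB Require Import structures.
From mathcomp Require Import all_boot all_order all_algebra.
Set Implicit Arguments. Unset Strict Implicit. Unset Printing Implicit Defensive.
Import Order.TTheory GRing.Theory Num.Theory.

(* Points {1,...,2n} are represented (shifted by one) as 'I_(2n) = {0,...,2n-1};
   the patterns are shift-invariant.  An arc (a,b) is a pair with a < b. *)
Definition arc_type (n : nat) : finType := ('I_(2 * n) * 'I_(2 * n))%type.

Definition is_matching (n : nat) (M : {set arc_type n}) : bool :=
  [forall p in M, (p.1 < p.2)%N] &&
  [forall x : 'I_(2 * n),
     #|[set p in M | (p.1 == x) || (p.2 == x)]| == 1%N].

(* occurrences of 21: arcs (i+1,j+2),(i+2,j+1) *)
Definition occ21 (n : nat) (M : {set arc_type n}) : nat :=
  #|[set pq : arc_type n * arc_type n |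
      [&& pq.1 \in M, pq.2 \in M,
          (val pq.2.1 == (val pq.1.1).+1) & ((val pq.2.2).+1 == val pq.1.2)]]|.

(* occurrences of 12: arcs (i+1,j+1),(i+2,j+2) *)
Definition occ12 (n : nat) (M : {set arc_type n}) : nat :=
  #|[set pq : arc_type n * arc_type n |
      [&& pq.1 \in M, pq.2 \in M,
          (val pq.2.1 == (val pq.1.1).+1) & (val pq.2.2 == (val pq.1.2).+1)]]|.

Definition a21 (n : nat) (k : int) : nat :=
  #|[set M : {set arc_type n} | is_matching M && (Posz (occ21 M) == k)]|.

Definition a12 (n : nat) (k : int) : nat :=
  #|[set M : {set arc_type n} | is_matching M && (Posz (occ12 M) == k)]|.

(* Main.v *)
Require Import Defs.
From HB Require Import structures.
From mathcomp Require Import all_boot all_order all_algebra.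
From mathcomp Require Import zify ring.
Set Implicit Arguments. Unset Strict Implicit. Unset Printing Implicit Defensive.

Definition mat m (M : {set 'I_m * 'I_m}) : bool :=
  [forall p in M, (p.1 < p.2)%N] &&
  [forall x : 'I_m, #|[set p in M | (p.1 == x) || (p.2 == x)]| == 1%N].

Definition OP (s : bool) m (M : {set 'I_m * 'I_m}) :=
  [set pq : ('I_m * 'I_m) * ('I_m * 'I_m) |
      [&& pq.1 \in M, pq.2 \in M,
          (val pq.2.1 == (val pq.1.1).+1) &
          (if s then (val pq.2.2).+1 == val pq.1.2 else val pq.2.2 == (val pq.1.2).+1)]].

Definition A s m (k : int) : nat :=
  #|[set M : {set 'I_m * 'I_m} | mat M && (Posz #|OP s M| == k)]|.

Lemma a21E n k : a21 n k = A true (2*n) k. Proof. by []. Qed.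
Lemma a12E n k : a12 n k = A false (2*n) k. Proof. by []. Qed.

Section Ins.
Variable m : nat.
Implicit Types (g : 'I_m.+1) (M : {set 'I_m * 'I_m}).

Definition Lf g (z : 'I_m) : 'I_m.+2 := lift ord0 (lift g z).
Definition LL g (p : 'I_m * 'I_m) : 'I_m.+2 * 'I_m.+2 := (Lf g p.1, Lf g p.2).
Definition e0 g : 'I_m.+2 * 'I_m.+2 := (ord0, lift ord0 g).
Definition phi g M := e0 g |: (LL g @: M).

Lemma val_Lf g z : (Lf g z : nat) = (if (g <= z)%N then z.+2 else z.+1).
Proof. by rewrite /Lf /= /bump; case: (leqP g z). Qed.

Lemma Lf_inj g : injective (Lf g).
Proof. by move=> x y /lift_inj /lift_inj. Qed.

Lemma LL_inj g : injective (LL g).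
Proof.
move=> p q E; have := congr1 fst E; have := congr1 snd E.
rewrite /= => /Lf_inj H2 /Lf_inj H1; case: p q H1 H2 {E} => [a b] [c d] /= -> -> //.
Qed.

Lemma Lf_lt g x y : (Lf g x < Lf g y)%N = (x < y)%N.
Proof. rewrite !val_Lf; case: (leqP g x); case: (leqP g y) => H1 H2; apply/idP/idP. - lia.
- lia.
- lia.
- lia.
- lia.
- lia.
- lia.
- lia.
Qed.

Lemma Lf_succ g x y : (Lf g y == (Lf g x).+1 :> nat) = (y == x.+1 :> nat) && (y != g :> nat).
Proof.
rewrite !val_Lf; case: (leqP g x); case: (leqP g y) => H1 H2;
  apply/idP/idP => [H|/andP[H3 H4]]; try (apply/andP; split); simpl in *; lia.
Qed.

Lemma Lf_ne0 g z : (Lf g z != 0 :> nat).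
Proof. by rewrite val_Lf; case: ifP. Qed.

Lemma Lf_neg g z : (Lf g z != g.+1 :> nat).
Proof. rewrite val_Lf; case: (leqP g z) => H; lia. Qed.


Lemma LL_ne0 g p : LL g p != e0 g.
Proof. by apply/negP => /eqP/(congr1 (fun q => nat_of_ord q.1)) /= /eqP; rewrite (negbTE (Lf_ne0 _ _)). Qed.

Lemma e0_notin g M : e0 g \notin LL g @: M.
Proof. by apply/imsetP => -[p _ /esym/eqP]; rewrite (negbTE (LL_ne0 _ _)). Qed.

Lemma LL_in_phi g M p : (LL g p \in phi g M) = (p \in M).
Proof. by rewrite /phi in_setU1 (negbTE (LL_ne0 _ _)) (mem_imset _ _ (@LL_inj g)). Qed.

Lemma e0_in_phi g M : e0 g \in phi g M.
Proof. exact: setU11. Qed.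

Lemma phi_cases g M p : p \in phi g M -> p = e0 g \/ exists2 a, a \in M & p = LL g a.
Proof. by rewrite /phi in_setU1 => /orP[/eqP->|/imsetP[a aM ->]]; [left|right; exists a]. Qed.

Lemma val_e0 g : ((e0 g).1 : nat) = 0%N /\ ((e0 g).2 : nat) = g.+1.
Proof. by []. Qed.

Lemma rangeL g (x : 'I_m.+2) : x != 0 :> nat -> x != g.+1 :> nat -> exists z, x = Lf g z.
Proof.
case: (unliftP ord0 x) => [y ->|->] //= _.
case: (unliftP g y) => [z ->|->]; first by exists z.
by rewrite /bump /= eqxx.
Qed.

End Ins.

Lemma mat_lt m (M : {set 'I_m * 'I_m}) p : mat M -> p \in M -> (p.1 < p.2)%N.
Proof. by case/andP => /forallP H _ pM; have := H p; rewrite pM. Qed.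

Lemma mat_uniq m (M : {set 'I_m * 'I_m}) (x : nat) p q : mat M -> p \in M -> q \in M ->
  (p.1 == x :> nat) || (p.2 == x :> nat) -> (q.1 == x :> nat) || (q.2 == x :> nat) -> p = q.
Proof.
move=> HM pM qM Hp Hq.
have [y Hy] : exists y : 'I_m, x = y by case/orP: Hp => /eqP <-; eexists.
subst x.
case/andP: HM => _ /forallP /(_ y) /eqP H.
have /card_le1_eqP := eq_leq H; apply; by rewrite inE ?pM ?qM.
Qed.

Lemma mat_ex m (M : {set 'I_m * 'I_m}) (x : 'I_m) : mat M -> exists2 p, p \in M & (p.1 == x) || (p.2 == x).
Proof.
case/andP=> _ /forallP/(_ x)/eqP H.
have : (0 < #|[set p in M | (p.1 == x) || (p.2 == x)]|)%N by rewrite H.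
by case/card_gt0P => p; rewrite inE => /andP[]; exists p.
Qed.

Lemma card_sum (T : finType) (P : pred T) : #|[set x | P x]| = \sum_(x | P x) 1.
Proof. by rewrite -sum1_card; apply: eq_bigl => x; rewrite inE. Qed.

Section Ins2.
Variable m : nat.
Implicit Types (g : 'I_m.+1) (M : {set 'I_m * 'I_m}).

Lemma e0_1 g : ((e0 g).1 : nat) = 0%N. Proof. by []. Qed.
Lemma e0_2 g : ((e0 g).2 : nat) = g.+1. Proof. by []. Qed.

Lemma pt_e0 g M (x : 'I_m.+2) : (x == 0 :> nat) || (x == g.+1 :> nat) ->
  [set p in phi g M | (p.1 == x) || (p.2 == x)] = [set e0 g].
Proof.
move=> Hx; apply/setP => p; rewrite in_set in_set1; apply/idP/idP.
- case/andP => /phi_cases [-> // | [a aM ->]] /= H; exfalso.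
  case/orP: H => /eqP E; move: Hx; rewrite -E (negbTE (Lf_ne0 _ _)) (negbTE (Lf_neg _ _)) //.
- move/eqP->; rewrite e0_in_phi /=.
  by case/orP: Hx => /eqP E; apply/orP; [left|right]; apply/eqP/val_inj; rewrite /= E.
Qed.

Lemma pt_L g M z : [set p in phi g M | (p.1 == Lf g z) || (p.2 == Lf g z)]
   = LL g @: [set p in M | (p.1 == z) || (p.2 == z)].
Proof.
apply/setP => p; rewrite in_set; apply/idP/idP.
- case/andP => /phi_cases [-> | [a aM ->]] /=.
  + by move/eqP => E; have := Lf_neg g z; rewrite -E /= /bump leq0n add1n eqxx.
  + rewrite !(inj_eq (@Lf_inj _ g)) => H.
    by rewrite (mem_imset _ _ (@LL_inj _ g)) inE aM H.
- case/imsetP => a; rewrite inE => /andP[aM H] ->.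
  by rewrite LL_in_phi aM /= !(inj_eq (@Lf_inj _ g)) H.
Qed.

Lemma mat_phi g M : mat (phi g M) = mat M.
Proof.
have E1 : [forall p in phi g M, (p.1 < p.2)%N] = [forall p in M, (p.1 < p.2)%N].
  apply/forallP/forallP => H p.
  - by have := H (LL g p); rewrite LL_in_phi /= Lf_lt.
  - apply/implyP => /phi_cases [-> | [a aM ->]] //=.
    by rewrite Lf_lt; exact: (implyP (H a) aM).
have E2 : [forall x : 'I_m.+2, #|[set p in phi g M | (p.1 == x) || (p.2 == x)]| == 1%N]
        = [forall z : 'I_m, #|[set p in M | (p.1 == z) || (p.2 == z)]| == 1%N].
  apply/forallP/forallP => H z.
  - by have := H (Lf g z); rewrite pt_L card_imset //; exact: LL_inj.
  - case: (boolP ((z == 0 :> nat) || (z == g.+1 :> nat))) => Hz.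
      by rewrite pt_e0 // cards1.
    move: Hz; rewrite negb_or => /andP[H1 H2].
    have [w ->] := rangeL H1 H2.
    by rewrite pt_L card_imset; [exact: H | exact: LL_inj].
by rewrite /mat E1 E2.
Qed.

Lemma phi_surj (M' : {set 'I_m.+2 * 'I_m.+2}) : mat M' -> exists g M, M' = phi g M.
Proof.
move=> HM; have [e eM He] := mat_ex (ord0 : 'I_m.+2) HM.
have lt := mat_lt HM eM.
have e1 : e.1 = ord0 by case/orP: He => /eqP // E; move: lt; rewrite E ltn0.
case: (unliftP ord0 e.2) => [g E2 | E2]; last by move: lt; rewrite E2 e1 ltnn.
have ee : e = e0 g by case: e eM He lt e1 E2 => a b /= _ _ _ -> ->.
subst e.
exists g, [set p | LL g p \in M'].
apply/setP => q; rewrite /phi in_setU1; apply/idP/idP.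
- move=> qM.
  case: (boolP [|| (q.1 == 0 :> nat), (q.1 == g.+1 :> nat), (q.2 == 0 :> nat) | (q.2 == g.+1 :> nat)]) => Hq.
  + apply/orP; left; apply/eqP.
    case/or4P: Hq => /eqP E.
    * by apply: (mat_uniq (x := 0) HM qM eM); rewrite ?E ?e0_1 eqxx ?orbT.
    * by apply: (mat_uniq (x := g.+1) HM qM eM); rewrite ?E ?e0_2 eqxx ?orbT.
    * by apply: (mat_uniq (x := 0) HM qM eM); rewrite ?E ?e0_1 eqxx ?orbT.
    * by apply: (mat_uniq (x := g.+1) HM qM eM); rewrite ?E ?e0_2 eqxx ?orbT.
  + move: Hq; rewrite !negb_or => /and4P[H1 H2 H3 H4].
    have [z1 E1] := rangeL H1 H2; have [z2 E2'] := rangeL H3 H4.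
    apply/orP; right; apply/imsetP; exists (z1, z2); last first.
      by rewrite /LL /= -E1 -E2' -surjective_pairing.
    by rewrite inE /LL /= -E1 -E2' -surjective_pairing.
- by case/orP => [/eqP -> // | /imsetP [p pM ->]]; rewrite inE in pM.
Qed.

Lemma phi_inj : injective (fun Mg : {set 'I_m * 'I_m} * 'I_m.+1 => phi Mg.2 Mg.1).
Proof.
move=> [M g] [M2 g2] /= E.
have : e0 g \in phi g2 M2 by rewrite -E e0_in_phi.
case/phi_cases => [E0 | [a _ E0]]; last first.
  by have := Lf_ne0 g2 a.1; rewrite -[X in X != _](congr1 (fun q => nat_of_ord q.1) E0).
have gg : g = g2.
  by apply/val_inj; have := congr1 (fun q => nat_of_ord q.2) E0; rewrite /= => -[].
subst g2; congr pair.
apply: (imset_inj (@LL_inj _ g)).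
rewrite -[LL g @: M](setU1K (e0_notin g M)) -[LL g @: M2](setU1K (e0_notin g M2)).
by move: E; rewrite /phi => ->.
Qed.

Lemma A_sum s k : A s m.+2 k =
  \sum_(M | mat M) #|[set g : 'I_m.+1 | Posz #|OP s (phi g M)| == k]|.
Proof.
rewrite /A.
pose Phi := fun Mg : {set 'I_m * 'I_m} * 'I_m.+1 => phi Mg.2 Mg.1.
have -> : [set M' | mat M' && (Posz #|OP s M'| == k)] =
          Phi @: [set Mg | mat Mg.1 && (Posz #|OP s (phi Mg.2 Mg.1)| == k)].
  apply/setP => M'; rewrite inE; apply/idP/idP.
  - case/andP => HM Hk; have [g [M EM]] := phi_surj HM.
    apply/imsetP; exists (M, g); last by [].
    by rewrite inE /= -EM Hk -(mat_phi g M) -EM HM.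
  - case/imsetP => -[M g]; rewrite inE /= => /andP[HM Hk] ->.
    by rewrite /Phi /= mat_phi HM Hk.
rewrite card_imset; last exact: phi_inj.
rewrite card_sum -(pair_big_dep (fun M => mat M) (fun M g => Posz #|OP s (phi g M)| == k) (fun _ _ => 1%N)) /=.
by apply: eq_bigr => M _; rewrite card_sum.
Qed.

End Ins2.

Lemma inOP s m (M : {set 'I_m * 'I_m}) pq : (pq \in OP s M) =
  [&& pq.1 \in M, pq.2 \in M,
          (val pq.2.1 == (val pq.1.1).+1) &
          (if s then (val pq.2.2).+1 == val pq.1.2 else val pq.2.2 == (val pq.1.2).+1)].
Proof. by rewrite in_set. Qed.

Section Occ.
Variable m : nat.
Implicit Types (g : 'I_m.+1) (M : {set 'I_m * 'I_m}).

Definition cond s g (a : 'I_m * 'I_m) :=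
  [&& (a.1 == 0 :> nat), (0 < g)%N & (if s then (a.2).+1 == g :> nat else (a.2 == g :> nat))].
Definition splt s g (pq : ('I_m * 'I_m) * ('I_m * 'I_m)) :=
  (pq.2.1 == g :> nat) || ((if s then pq.1.2 else pq.2.2) == g :> nat).
Definition LLL g (pq : ('I_m * 'I_m) * ('I_m * 'I_m)) := (LL g pq.1, LL g pq.2).

Lemma OP_e0L s g M b : ((e0 g, LL g b) \in OP s (phi g M)) = (b \in M) && cond s g b.
Proof.
rewrite inOP /= e0_in_phi LL_in_phi /cond /=.
case: (b \in M) => //=; rewrite /bump !leq0n !add1n.
by case: s; case: (leqP g b.1); case: (leqP g b.2) => H1 H2 /=; lia.
Qed.

Lemma OP_LL s g M a b : ((LL g a, LL g b) \in OP s (phi g M)) = ((a, b) \in OP s M) && ~~ splt s g (a, b).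
Proof.
rewrite !inOP !LL_in_phi /splt /=.
case: (a \in M) => //=; case: (b \in M) => //=; rewrite /bump !leq0n !add1n.
by case: s; case: (leqP g a.1); case: (leqP g a.2); case: (leqP g b.1); case: (leqP g b.2) => H1 H2 H3 H4 /=; lia.
Qed.

Lemma OP_snd_e0 s g M p : ((p, e0 g) \in OP s (phi g M)) = false.
Proof. by rewrite inOP /= !andbF. Qed.

Lemma OP_mem s m' (M : {set 'I_m' * 'I_m'}) p q : (p, q) \in OP s M -> (p \in M) && (q \in M).
Proof. by rewrite inOP => /and4P[-> ->]. Qed.

Lemma card_OP_phi s g M : #|OP s (phi g M)| =
   #|M :&: [set a | cond s g a]| + #|OP s M :\: [set pq | splt s g pq]|.
Proof.
rewrite -(cardsID [set pq | pq.1 == e0 g] (OP s (phi g M))).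
congr addn.
- have -> : OP s (phi g M) :&: [set pq | pq.1 == e0 g] =
      (fun a => (e0 g, LL g a)) @: (M :&: [set a | cond s g a]).
    apply/setP => -[p q]; rewrite in_setI in_set /=; apply/idP/idP.
    + case/andP => H /eqP E; subst p.
      have /andP[_ qphi] := OP_mem H.
      case/phi_cases: qphi => [E|[b bM E]]; subst q; first by rewrite OP_snd_e0 in H.
      rewrite OP_e0L in H; apply/imsetP; exists b => //.
      by rewrite in_setI in_set.
    + case/imsetP => b; rewrite in_setI in_set => Hb [-> ->].
      by rewrite OP_e0L Hb eqxx.
  by rewrite card_imset // => a b /(congr1 snd) /LL_inj.
- have -> : OP s (phi g M) :\: [set pq | pq.1 == e0 g] =
      LLL g @: (OP s M :\: [set pq | splt s g pq]).
    apply/setP => -[p q]; rewrite in_setD in_set /=; apply/idP/idP.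
    + case/andP => Hne H.
      have /andP[pphi qphi] := OP_mem H.
      case/phi_cases: pphi => [E|[a aM E]]; subst p; first by rewrite eqxx in Hne.
      case/phi_cases: qphi => [E|[b bM E]]; subst q; first by rewrite OP_snd_e0 in H.
      rewrite OP_LL in H; apply/imsetP; exists (a, b) => //.
      by rewrite in_setD in_set andbC.
    + case/imsetP => -[a b]; rewrite in_setD in_set => /andP[H1 H2] [-> ->].
      by rewrite OP_LL H1 H2 LL_ne0.
  rewrite card_imset // => -[a b] [c d] E.
  have := congr1 fst E; have := congr1 snd E; rewrite /= => /LL_inj -> /LL_inj -> //.
Qed.

End Occ.

Lemma sum_eq1 n (u : nat) : (u < n)%N -> \sum_(i < n) ((u == i :> nat) : nat) = 1%N.
Proof.
move=> H; rewrite (bigD1 (Ordinal H)) //= eqxx big1 // => i Hi.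
by move: Hi; rewrite -val_eqE /= eq_sym => /negbTE ->.
Qed.

Section Dist.
Variable m : nat.
Implicit Types (g : 'I_m.+1) (M : {set 'I_m * 'I_m}).

Lemma D_le1 s g M : mat M -> (#|OP s M :&: [set pq | splt s g pq]| <= 1)%N.
Proof.
move=> HM; apply/card_le1_eqP => -[p q] [p' q']; rewrite !in_setI !inOP !in_set /splt /=.
move=> /andP[/and4P[pM qM E1 E2] S] /andP[/and4P[pM' qM' E1' E2'] S'].
have ltp := mat_lt HM pM; have ltq := mat_lt HM qM.
have ltp' := mat_lt HM pM'; have ltq' := mat_lt HM qM'.
have key : q = q' \/ p = p'.
  case: s E2 E2' S S' => /= E2 E2' S S'.
  - case/orP: S => S; case/orP: S' => S'.
    + by left; apply: (mat_uniq (x := g) HM qM qM'); rewrite ?S ?S'.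
    + have E : q = p' by apply: (mat_uniq (x := g) HM qM pM'); rewrite ?S ?S' ?orbT.
      by subst q; exfalso; simpl in *; lia.
    + have E : p = q' by apply: (mat_uniq (x := g) HM pM qM'); rewrite ?S ?S' ?orbT.
      by subst p; exfalso; simpl in *; lia.
    + by right; apply: (mat_uniq (x := g) HM pM pM'); rewrite ?S ?S' orbT.
  - by left; apply: (mat_uniq (x := g) HM qM qM').
case: key => E; subst.
- have -> // : p' = p.
  by apply: (mat_uniq (x := p.1) HM pM' pM); rewrite ?eqxx //; apply/orP; left; simpl in *; lia.
- have -> // : q' = q.
  by apply: (mat_uniq (x := q.1) HM qM' qM); rewrite ?eqxx //; apply/orP; left; simpl in *; lia.
Qed.

Lemma sum_D s M : mat M ->
  \sum_(g : 'I_m.+1) #|OP s M :&: [set pq | splt s g pq]| = (2 * #|OP s M|)%N.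
Proof.
move=> HM.
rewrite (eq_bigr (fun g : 'I_m.+1 => \sum_(pq in OP s M) (splt s g pq : nat))); last first.
  move=> g _; rewrite -sum1_card [RHS]big_mkcond [LHS]big_mkcond; apply: eq_bigr => pq _.
  by rewrite in_setI in_set; case: (pq \in OP s M) => //=; case: (splt s g pq).
rewrite exchange_big /= -sum1_card big_distrr /=; apply: eq_bigr => -[p q].
rewrite inOP /= => /and4P[pM qM E1 E2]; rewrite muln1.
have ltp := mat_lt HM pM; have ltq := mat_lt HM qM.
have Hu : (q.1 < m.+1)%N by apply: ltnW; exact: ltn_ord.
have Hw : ((if s then p.2 else q.2) < m.+1)%N by case: s {E2}; apply: ltnW; exact: ltn_ord.
transitivity (\sum_(i < m.+1) ((q.1 == i :> nat) : nat) +
   \sum_(i < m.+1) (((if s then p.2 else q.2) == i :> nat) : nat)); last by rewrite (sum_eq1 Hu) (sum_eq1 Hw).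
rewrite /splt /= -big_split /=; apply: eq_bigr => i _.
case: s E2 Hw => /= E2 Hw; case: eqP => Ei1; case: eqP => Ei2 //=; exfalso; simpl in *; lia.
Qed.


Lemma cond_count s M : mat M -> (0 < m)%N ->
  exists t : 'I_m.+1, forall g, #|M :&: [set a | cond s g a]| = (g == t).
Proof.
move=> HM m0; have [a0 a0M Ha0] := mat_ex (Ordinal m0) HM.
have lt0 := mat_lt HM a0M.
have a01 : (a0.1 == 0 :> nat).
  by case/orP: Ha0 => /eqP E; move: lt0; rewrite E //= ltn0.
have b2 := ltn_ord a0.2.
exists (inord (if s then (a0.2).+1 else a0.2)) => g.
have -> : M :&: [set a | cond s g a] = if cond s g a0 then [set a0] else set0.
  apply/setP => a; rewrite in_setI in_set; case: ifP => C.
  - rewrite in_set1; apply/idP/idP.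
    + case/andP => aM /and3P[Ca _ _]; apply/eqP.
      by apply: (mat_uniq (x := 0) HM aM a0M); rewrite ?Ca ?a01.
    + by move/eqP ->; rewrite a0M C.
  - rewrite in_set0; apply/negP => /andP[aM Ca].
    have E : a = a0.
      by case/and3P: Ca => Ca _ _; apply: (mat_uniq (x := 0) HM aM a0M); rewrite ?Ca ?a01.
    by subst a; rewrite Ca in C.
have -> : cond s g a0 = (g == inord (if s then (a0.2).+1 else a0.2)).
  rewrite -val_eqE /= inordK; last by case: s; simpl in *; lia.
  by rewrite /cond; case: s; simpl in *; lia.
by case: (g == _); rewrite ?cards1 ?cards0.
Qed.

Lemma cond_D s g M a : mat M -> a \in M -> cond s g a ->
  #|OP s M :&: [set pq | splt s g pq]| = 0%N.
Proof.
move=> HM aM Ca; apply/eqP; rewrite cards_eq0; apply/eqP/setP => -[p q].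
rewrite in_set0 in_setI inOP !in_set /splt /=; apply/negP.
move=> /andP[/and4P[pM qM E1 E2] S].
have ltp := mat_lt HM pM; have ltq := mat_lt HM qM; have lta := mat_lt HM aM.
move: Ca; rewrite /cond; case: s E2 S => /= E2 S /and3P[Ca1 Ca2 Ca3].
- case/orP: S => S.
  + have E : p = a by apply: (mat_uniq (x := a.2) HM pM aM); rewrite ?eqxx ?orbT //; apply/orP; left; simpl in *; lia.
    subst p; simpl in *; lia.
  + have E : q = a by apply: (mat_uniq (x := a.2) HM qM aM); rewrite ?eqxx ?orbT //; apply/orP; right; simpl in *; lia.
    subst q; simpl in *; lia.
- have E : q = a by apply: (mat_uniq (x := g) HM qM aM); rewrite ?S ?Ca3 ?orbT.
  subst q; simpl in *; lia.
Qed.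

End Dist.

Import GRing.Theory Num.Theory.
Definition ind (b : bool) : int := if b then 1 else 0.

Section Count.
Variable m : nat.
Local Open Scope ring_scope.

Lemma count_g s (M : {set 'I_m * 'I_m}) (k : int) : mat M -> (0 < m)%N ->
  ((#|[set g : 'I_m.+1 | Posz #|OP s (phi g M)| == k]|)%:R : int) =
  ind (Posz #|OP s M| == k - 1) + (m%:R - 2 * (#|OP s M|)%:R) * ind (Posz #|OP s M| == k)
  + (2 * (#|OP s M|)%:R) * ind (Posz #|OP s M| == k + 1).
Proof.
move=> HM m0.
have [t Ht] := cond_count s HM m0.
pose P (g : 'I_m.+1) := #|M :&: [set a | cond s g a]|.
pose D (g : 'I_m.+1) := #|OP s M :&: [set pq | splt s g pq]|.
have occE g : #|OP s (phi g M)| = (P g + (#|OP s M| - D g))%N.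
  have H := cardsID [set pq | splt s g pq] (OP s M).
  rewrite card_OP_phi /P /D; lia.
have Dle g : (D g <= 1)%N := D_le1 s g HM.
have Dc g : (D g <= #|OP s M|)%N := subset_leq_card (subsetIl _ _).
have PD g : P g = 1%N -> D g = 0%N.
  move=> H1; have : (0 < P g)%N by rewrite H1.
  case/card_gt0P => a; rewrite in_setI in_set => /andP[aM Ca].
  exact: cond_D HM aM Ca.
have -> : ((#|[set g : 'I_m.+1 | Posz #|OP s (phi g M)| == k]|)%:R : int) =
     \sum_(g : 'I_m.+1) ind (Posz #|OP s (phi g M)| == k).
  rewrite card_sum natr_sum big_mkcond /=; apply: eq_bigr => g _.
  by rewrite /ind; case: (_ == k).
rewrite (eq_bigr (fun g => (P g)%:R * ind (Posz #|OP s M| == k - 1)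
     + (D g)%:R * ind (Posz #|OP s M| == k + 1)
     + (1 - (P g)%:R - (D g)%:R) * ind (Posz #|OP s M| == k))); last first.
  move=> g _; rewrite occE.
  have := Dle g; have := PD g; have := Dc g; rewrite /P Ht.
  case: (g == t) => /= Dcg PDg Dl.
  - rewrite PDg //.
    have -> : (Posz (1 + (#|OP s M| - 0)) == k) = (Posz #|OP s M| == k - 1) by lia.
    by rewrite /ind; case: (_ == _); case: (_ == _); case: (_ == _); ring.
  - have [D0|D1] : D g = 0%N \/ D g = 1%N by lia.
    + rewrite D0.
      have -> : (Posz (0 + (#|OP s M| - 0)) == k) = (Posz #|OP s M| == k) by lia.
      by rewrite /ind; case: (_ == _); case: (_ == _); case: (_ == _); ring.
    + rewrite D1.
      have -> : (Posz (0 + (#|OP s M| - 1)) == k) = (Posz #|OP s M| == k + 1).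
        move: Dcg; rewrite D1 => Hc; move: (#|OP s M|) Hc => c Hc; clear -Hc; lia.
      by rewrite /ind; case: (_ == _); case: (_ == _); case: (_ == _); ring.
rewrite !big_split /= -!mulr_suml !sumrB.
have SP : \sum_(g : 'I_m.+1) ((P g)%:R : int) = 1.
  rewrite -natr_sum (eq_bigr (fun g : 'I_m.+1 => ((val t == val g :> nat) : nat))).
    by rewrite (sum_eq1 (ltn_ord t)).
  by move=> g _; rewrite /P Ht eq_sym.
have SD : \sum_(g : 'I_m.+1) ((D g)%:R : int) = (2 * #|OP s M|)%N%:R.
  by rewrite -natr_sum sum_D.
rewrite SP SD sumr_const card_ord natrM -addn1 natrD.
ring.
Qed.

End Count.

Local Open Scope ring_scope.

Lemma sum_ind (T : finType) (P : pred T) (c : T -> int) (F : int -> int) (j : int) :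
  \sum_(x | P x) F (c x) * ind (c x == j) = F j * (#|[set x | P x && (c x == j)]|)%:R.
Proof.
transitivity (\sum_(x | P x && (c x == j)) F j).
  rewrite big_mkcondr /=; apply: eq_bigr => x _; rewrite /ind.
  by case: eqP => [->|_]; rewrite ?mulr1 ?mulr0.
by rewrite card_sum natr_sum mulr_sumr; apply: eq_bigr => x _; rewrite mulr1n mulr1.
Qed.

Lemma A_rec s m (k : int) : (0 < m)%N -> ((A s m.+2 k)%:R : int) =
  (A s m (k-1))%:R + (m%:R - 2*k) * (A s m k)%:R + 2*(k+1) * (A s m (k+1))%:R.
Proof.
move=> m0; rewrite A_sum natr_sum.
rewrite (eq_bigr _ (fun M HM => count_g s k HM m0)) !big_split /=.
have E1 := sum_ind (fun M : {set 'I_m * 'I_m} => mat M) (fun M => Posz #|OP s M|) (fun _ => 1) (k - 1).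
have E2 := sum_ind (fun M : {set 'I_m * 'I_m} => mat M) (fun M => Posz #|OP s M|) (fun x => m%:R - 2 * x) k.
have E3 := sum_ind (fun M : {set 'I_m * 'I_m} => mat M) (fun M => Posz #|OP s M|) (fun x => 2 * x) (k + 1).
rewrite /= mul1r in E1 E2 E3.
rewrite /A -E1 -E2 -E3.
congr (_ + _ + _).
- by apply: eq_bigr => M _; rewrite mul1r.
- by apply: eq_bigr => M _; rewrite (natz #|OP s M|).
- by apply: eq_bigr => M _; rewrite (natz #|OP s M|).
Qed.

Lemma I0_empty (x : 'I_0) : False.
Proof. by case: x. Qed.

Lemma A2 s (k : int) : A s 2 k = (k == 0 : nat).
Proof.
rewrite A_sum.
have occ0 g (M : {set 'I_0 * 'I_0}) : #|OP s (phi g M)| = 0%N.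
  rewrite card_OP_phi.
  have E (T : finType) (X : {set T}) (f : T -> 'I_0) : #|X| = 0%N.
    by apply/eqP; rewrite cards_eq0; apply/eqP/setP => x; case: (I0_empty (f x)).
  by rewrite (E _ _ (fun x => x.1)) (E _ _ (fun x => x.1.1)).
rewrite (eq_bigr (fun _ : {set 'I_0 * 'I_0} => (k == 0 : nat))); last first.
  move=> M _; under eq_finset => g do rewrite occ0.
  case: (boolP (k == 0)) => Hk.
    rewrite (eqP Hk) /= (_ : [set g : 'I_1 | _] = setT) ?cardsT ?card_ord //.
  by apply/eqP; rewrite cards_eq0; apply/eqP/setP => g; rewrite in_set in_set0 eq_sym (negbTE Hk).
rewrite (big_pred1 set0) // => M /=.
have -> : M = set0 by apply/setP => -[x y]; case: (I0_empty x).
rewrite eqxx; apply/andP; split; apply/forallP => x; [case: (I0_empty x.1) | case: (I0_empty x)].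
Qed.

Lemma A_neg s m (k : int) : k < 0 -> A s m k = 0%N.
Proof.
move=> Hk; apply/eqP; rewrite cards_eq0; apply/eqP/setP => M.
rewrite in_set in_set0.
have -> : (Posz #|OP s M| == k) = false by apply/negbTE/negP => /eqP E; lia.
by rewrite andbF.
Qed.

Theorem theorem1 :
  (forall (a : nat -> int -> nat), (a = a21 \/ a = a12) ->
     (forall (n : nat) (k : int), (1 <= n)%N ->
        ((a n.+1 k)%:Z = (a n (k - 1))%:Z
                         + 2%:Z * (n%:Z - k) * (a n k)%:Z
                         + 2%:Z * (k + 1) * (a n (k + 1))%:Z))
     /\ a 1%N 0 = 1%N
     /\ (forall k : int, k != 0 -> a 1%N k = 0%N)
     /\ (forall (n : nat) (k : int), k < 0 -> a n k = 0%N)).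
Proof.
move=> a Ha.
have [s Es] : exists s, forall n k, a n k = A s (2 * n) k.
  by case: Ha => ->; [exists true | exists false].
split; [|split; [|split]].
- move=> n k n1; rewrite !Es.
  have -> : (2 * n.+1 = (2 * n).+2)%N by rewrite mulnS.
  rewrite -!natz A_rec; last by rewrite muln_gt0.
  rewrite natrM; ring.
- by rewrite Es A2.
- by move=> k Hk; rewrite Es A2 (negbTE Hk).
- by move=> n k Hk; rewrite Es A_neg.
Qed.
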